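(* Let $k$ be a positive integer and let $K\subset\mathbb{R}^d$ be a centrally symmetric convex body. Let $\mathcal{K}=\{o_i+\tau_iK: i=1,\dots,n\}$ with $o_i\in\mathbb{R}^d$ and $\tau_1,\dots,\tau_n>0$. Suppose every hyperplane in $\mathbb{R}^d$ intersects the interiors of at most $k$ members of $\mathcal{K}$. Then some translate of $\frac1k\left(\sum_{i=1}^n\tau_i\right)K$ is contained in $\operatorname{conv}\bigcup\mathcal{K}$.
   Context: A convex body is a compact convex set with nonempty interior. *)

(* Defs.v *)
From mathcomp Require Import all_boot.
From Stdlib Require Import Reals.
Set Implicit Arguments.
Unset Strict Implicit.

Open Scope R_scope.

Definition point (d : nat) := 'I_d -> R.

Definition vadd d (x y : point d) : point d := fun i => x i + y i.
Definition vscale d (c : R) (x : point d) : point d := fun i => c * x i.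
Definition vzero d : point d := fun _ => 0.

Definition dot d (x y : point d) : R := \big[Rplus/0]_(i < d) (x i * y i).

(* Topology of R^d (via the product / sup metric, equivalent to Euclidean). *)
Definition interiorR d (S : point d -> Prop) (x : point d) : Prop :=
  exists eps, 0 < eps /\
    forall y : point d, (forall i, Rabs (y i - x i) < eps) -> S y.

Definition is_closed d (S : point d -> Prop) : Prop :=
  forall x : point d, ~ S x ->
    exists eps, 0 < eps /\
      forall y : point d, (forall i, Rabs (y i - x i) < eps) -> ~ S y.

Definition is_bounded d (S : point d -> Prop) : Prop :=
  exists M, forall x : point d, S x -> forall i, Rabs (x i) <= M.

(* Heine-Borel: compact in R^d = closed and bounded *)
Definition is_compact d (S : point d -> Prop) : Prop :=
  is_closed S /\ is_bounded S.

Definition is_convex d (S : point d -> Prop) : Prop :=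
  forall x y : point d, S x -> S y -> forall t, 0 <= t <= 1 ->
    S (vadd (vscale t x) (vscale (1 - t) y)).

Definition convex_body d (K : point d -> Prop) : Prop :=
  is_compact K /\ is_convex K /\ exists x, interiorR K x.

Definition centrally_symmetric d (K : point d -> Prop) : Prop :=
  exists c : point d, forall x, K x ->
    K (vadd (vscale 2 c) (vscale (-1) x)).

Definition homothet d (o : point d) (tau : R) (K : point d -> Prop) : point d -> Prop :=
  fun x => exists y, K y /\ x = vadd o (vscale tau y).

(* hyperplane {x | <a,x> = b}, a <> 0 *)
Definition hyperplane d (a : point d) (b : R) : point d -> Prop :=
  fun x => dot a x = b.

Fixpoint comb d (l : list (R * point d)) : point d :=
  match l with
  | nil => @vzero d
  | cons (w, p) l' => vadd (vscale w p) (comb l')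
  end.
Fixpoint wsum d (l : list (R * point d)) : R :=
  match l with
  | nil => 0
  | cons (w, _) l' => w + wsum l'
  end.

Definition convhull d (S : point d -> Prop) : point d -> Prop :=
  fun x => exists l : list (R * point d),
    (forall wp, List.In wp l -> 0 <= fst wp /\ S (snd wp)) /\
    wsum l = 1 /\ x = comb l.

(* Main.v *)
From Stdlib Require Import List.
Require Import Defs.
From mathcomp Require Import all_boot.
From Stdlib Require Import Reals Lra Lia Psatz FunctionalExtensionality Classical.
From mathcomp Require Import zify.
Open Scope R_scope.

Definition sumL {A} (f : A -> R) (l : list A) := List.fold_right (fun a acc => f a + acc) 0 l.
Definition nsum {A} (f : A -> nat) (l : list A) := List.fold_right (fun a acc => (f a + acc)%nat) 0%nat l.

Lemma sumL_app {A} (f : A -> R) l1 l2 : sumL f (app l1 l2) = sumL f l1 + sumL f l2.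
Proof. induction l1 as [|a l IH]; simpl; [lra|rewrite IH; lra]. Qed.
Lemma nsum_app {A} (f : A -> nat) l1 l2 : nsum f (app l1 l2) = (nsum f l1 + nsum f l2)%nat.
Proof. induction l1 as [|a l IH]; simpl; [lia|rewrite IH; lia]. Qed.
Lemma sumL_map {A B} (f : B -> R) (g : A -> B) l : sumL f (List.map g l) = sumL (fun a => f (g a)) l.
Proof. induction l as [|a l IH]; simpl; [lra|rewrite IH; lra]. Qed.
Lemma nsum_map {A B} (f : B -> nat) (g : A -> B) l : nsum f (List.map g l) = nsum (fun a => f (g a)) l.
Proof. induction l as [|a l IH]; simpl; [lia|rewrite IH; lia]. Qed.
Lemma sumL_ext {A} (f g : A -> R) l : (forall a, In a l -> f a = g a) -> sumL f l = sumL g l.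
Proof. induction l as [|a l IH]; simpl; intros H; [lra|]. rewrite H; [|now left]. rewrite IH; auto. Qed.
Lemma sumL_le {A} (f g : A -> R) l : (forall a, In a l -> f a <= g a) -> sumL f l <= sumL g l.
Proof. induction l as [|a l IH]; simpl; intros H; [lra|]. assert (f a <= g a) by auto. assert (sumL f l <= sumL g l) by auto. lra. Qed.
Lemma nsum_le {A} (f g : A -> nat) l : (forall a, In a l -> (f a <= g a)%nat) -> (nsum f l <= nsum g l)%nat.
Proof. induction l as [|a l IH]; simpl; intros H; [lia|]. assert (f a <= g a)%nat by auto. assert (nsum f l <= nsum g l)%nat by auto. lia. Qed.
Lemma sumL_add {A} (f g : A -> R) l : sumL (fun a => f a + g a) l = sumL f l + sumL g l.
Proof. induction l as [|a l IH]; simpl; [lra|rewrite IH; lra]. Qed.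
Lemma sumL_scal {A} (c : R) (f : A -> R) l : sumL (fun a => c * f a) l = c * sumL f l.
Proof. induction l as [|a l IH]; simpl; [lra|rewrite IH; lra]. Qed.
Lemma sumL_nsum {A} (c : R) (f : A -> nat) l : sumL (fun a => c * INR (f a)) l = c * INR (nsum f l).
Proof. induction l as [|a l IH]; simpl; [lra|]. rewrite IH plus_INR; lra. Qed.
Lemma sumL_ge0 {A} (f : A -> R) l : (forall a, In a l -> 0 <= f a) -> 0 <= sumL f l.
Proof. intros H. assert (sumL (fun _ => 0) l = 0) as E. { induction l; simpl; auto. rewrite IHl; auto; [lra|intros; apply H; now right]. }
  rewrite <- E. apply sumL_le. auto. Qed.

Lemma max_decomp {A} (f : A -> R) (l : list A) : l <> nil ->
  exists l1 x l2, l = app l1 (x :: l2) /\ forall y, In y l -> f y <= f x.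
Proof.
  induction l as [|a l IH]; intros Hne; [congruence|].
  destruct l as [|b l'].
  - exists nil, a, nil. split; [reflexivity|]. intros y [<-|[]]; lra.
  - destruct IH as [l1 [x [l2 [E H]]]]; [discriminate|].
    destruct (Rle_dec (f a) (f x)).
    + exists (a :: l1), x, l2. split; [rewrite E; reflexivity|].
      intros y [<-|Hy]; auto.
    + exists nil, a, (b :: l'). split; [reflexivity|].
      intros y [<-|Hy]; [lra|]. specialize (H y Hy). lra.
Qed.

Lemma exists_v (l0 : R) (l : list R) : exists v, l0 < v /\ forall e, In e l -> l0 < e -> v < e.
Proof.
  induction l as [|e l IH].
  - exists (l0 + 1). split; [lra|intros e []].
  - destruct IH as [v [H1 H2]]. destruct (Rlt_dec l0 e).
    + exists (Rmin v ((l0 + e)/2)). split.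
      * apply Rmin_glb_lt; lra.
      * intros e' [<-|He'] H. { pose proof (Rmin_r v ((l0+e)/2)); lra. }
        pose proof (Rmin_l v ((l0+e)/2)). specialize (H2 e' He' H). lra.
    + exists v. split; auto. intros e' [<-|He'] H; [lra|auto].
Qed.

Definition indI (v : R) (iv : R * R) : nat :=
  if Rlt_dec (fst iv) v then if Rlt_dec v (snd iv) then 1%nat else 0%nat else 0%nat.
Definition Glen (iv : R * R) := snd iv - fst iv.
Definition Gf (b : R) (iv : R * R) := (snd iv - fst iv) * (2 * b - fst iv - snd iv).

Lemma main1D (k : nat) : forall n (l : list (R * R)) (b : R), length l = n ->
  (forall iv, In iv l -> fst iv <= snd iv /\ snd iv <= b) ->
  (forall v, (nsum (indI v) l <= k)%nat) ->
  (sumL Glen l) ^ 2 <= INR k * sumL (Gf b) l.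
Proof.
  induction n as [|n IH]; intros l b Hlen Hiv Hk.
  - destruct l; [|discriminate]. simpl. lra.
  - destruct (max_decomp fst l) as [l1 [x0 [l2 [E Hmax]]]].
    { intros ->; discriminate. }
    set (l0 := fst x0).
    set (r := app l1 l2).
    set (tr := fun iv : R * R => (fst iv, Rmin (snd iv) l0)).
    set (top := fun iv : R * R => (l0, Rmax (snd iv) l0)).
    set (T := List.map tr r).
    assert (Hx0 : In x0 l) by (rewrite E; apply in_or_app; right; now left).
    assert (Hr : forall iv, In iv r -> In iv l).
    { intros iv Hi. rewrite E. apply in_app_or in Hi. apply in_or_app. destruct Hi; auto. right; now right. }
    assert (HlenT : length T = n).
    { unfold T, r. rewrite length_map. rewrite E in Hlen. rewrite length_app in Hlen |- *. simpl in Hlen. rewrite <- plus_n_Sm in Hlen. injection Hlen. intros; rewrite length_app; lia. }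
    assert (HT : forall iv, In iv T -> fst iv <= snd iv /\ snd iv <= l0).
    { intros iv Hi. unfold T in Hi. apply in_map_iff in Hi. destruct Hi as [w [<- Hw]].
      simpl. pose proof (Hiv w (Hr w Hw)). pose proof (Hmax w (Hr w Hw)).
      split; [apply Rmin_glb; unfold l0 in *; lra| apply Rmin_r]. }
    assert (HkT : forall v, (nsum (indI v) T <= k)%nat).
    { intros v. eapply leq_trans; [|apply (Hk v)].
      unfold T. rewrite nsum_map. rewrite E. unfold r. rewrite !nsum_app. simpl.
      assert (forall l', (nsum (fun a => indI v (tr a)) l' <= nsum (indI v) l')%nat).
      { intros l'. apply nsum_le. intros a _. unfold indI, tr. simpl.
        destruct (Rlt_dec (fst a) v); simpl; simpl; [|lia]. destruct (Rlt_dec v (Rmin (snd a) l0)); simpl; [|lia].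
        destruct (Rlt_dec v (snd a)); simpl; [lia|]. pose proof (Rmin_l (snd a) l0). lra. }
      pose proof (H l1). pose proof (H l2). lia. }
    pose proof (IH T l0 HlenT HT HkT) as IHT.
    set (U := x0 :: List.map top r).
    assert (Hl0e : l0 <= snd x0 /\ snd x0 <= b) by (apply Hiv; auto).
    assert (HU : forall u, In u U -> fst u = l0 /\ l0 <= snd u /\ snd u <= b).
    { intros u [<-|Hu]. { unfold l0 in *; destruct Hl0e; split; [reflexivity|split; lra]. }
      apply in_map_iff in Hu. destruct Hu as [w [<- Hw]]. simpl.
      pose proof (Hiv w (Hr w Hw)). split; [reflexivity|split; [apply Rmax_r|]].
      apply Rmax_lub; lra. }
    assert (Hsplit : forall (F : R * R -> R), (forall iv, In iv r -> F iv = F (tr iv) + F (top iv)) ->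
       sumL F l = sumL F T + sumL F U).
    { intros F HF. rewrite E. unfold T, U. simpl. rewrite !sumL_map. unfold r in *.
      rewrite !sumL_app. simpl.
      rewrite (sumL_ext F (fun a => F (tr a) + F (top a)) l1); [|intros; apply HF; apply in_or_app; auto].
      rewrite (sumL_ext F (fun a => F (tr a) + F (top a)) l2); [|intros; apply HF; apply in_or_app; auto].
      rewrite !sumL_add. lra. }
    assert (HsL : sumL Glen l = sumL Glen T + sumL Glen U).
    { apply Hsplit. intros iv _. unfold Glen, tr, top. simpl.
      destruct (Rle_dec (snd iv) l0).
      - rewrite Rmin_left ?Rmax_right; lra.
      - rewrite Rmin_right ?Rmax_left; lra. }
    assert (HsG : sumL (Gf b) l = sumL (Gf b) T + sumL (Gf b) U).
    { apply Hsplit. intros iv Hi. pose proof (Hmax iv (Hr iv Hi)). unfold Gf, tr, top. simpl.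
      destruct (Rle_dec (snd iv) l0) as [Hle|Hlt].
      - rewrite (Rmin_left _ _ Hle) (Rmax_right _ _ Hle). ring.
      - assert (Hle : l0 <= snd iv) by lra. rewrite (Rmin_right _ _ Hle) (Rmax_left _ _ Hle). ring. }
    assert (HTb : sumL (Gf b) T = sumL (Gf l0) T + 2 * (b - l0) * sumL Glen T).
    { rewrite -sumL_scal -sumL_add. apply sumL_ext. intros a _. unfold Gf, Glen. ring. }
    set (D := b - l0).
    assert (HLT : 0 <= sumL Glen T).
    { apply sumL_ge0. intros a Ha. apply HT in Ha. unfold Glen. lra. }
    assert (HLU : 0 <= sumL Glen U).
    { apply sumL_ge0. intros a Ha. apply HU in Ha. unfold Glen. lra. }
    assert (HGU : D * sumL Glen U <= sumL (Gf b) U).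
    { rewrite <- sumL_scal. apply sumL_le. intros a Ha. apply HU in Ha. unfold Gf, Glen, D.
      destruct Ha as [-> [? ?]]. nra. }
    set (pos := fun u : R * R => if Rlt_dec l0 (snd u) then 1%nat else 0%nat).
    assert (HUc : sumL Glen U <= D * INR (nsum pos U)).
    { rewrite <- sumL_nsum. apply sumL_le. intros a Ha. apply HU in Ha. unfold Glen, pos, D.
      destruct (Rlt_dec l0 (snd a)); simpl; simpl; lra. }
    destruct (exists_v l0 (List.map snd l)) as [v [Hv1 Hv2]].
    assert (Hcnt : (nsum pos U <= k)%nat).
    { eapply leq_trans; [|apply (Hk v)]. unfold U. simpl. rewrite nsum_map. rewrite E. unfold r.
      rewrite !nsum_app. simpl.
      assert (Hpx : (pos x0 <= indI v x0)%nat).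
      { unfold pos, indI. destruct (Rlt_dec l0 (snd x0)); simpl; [|lia].
        destruct (Rlt_dec (fst x0) v); simpl; [|unfold l0 in *; lra].
        destruct (Rlt_dec v (snd x0)); simpl; [lia|]. exfalso. apply n0. apply Hv2; auto.
        apply in_map; auto. }
      assert (H : forall l', (forall a, In a l' -> In a l) ->
        (nsum (fun a => pos (top a)) l' <= nsum (indI v) l')%nat).
      { intros l' Hl'. apply nsum_le. intros a Ha. specialize (Hl' a Ha). unfold pos, top, indI. simpl.
        destruct (Rlt_dec l0 (Rmax (snd a) l0)); simpl; [|lia].
        assert (l0 < snd a). { destruct (Rle_dec (snd a) l0); [rewrite Rmax_right in r0; lra|lra]. }
        pose proof (Hmax a Hl').
        destruct (Rlt_dec (fst a) v); simpl; [|unfold l0 in *; lra].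
        destruct (Rlt_dec v (snd a)); simpl; [lia|]. exfalso. apply n0. apply Hv2; auto. apply in_map; auto. }
      assert (H1 := H l1). assert (H2 := H l2).
      assert (forall a, In a l1 -> In a l) by (intros; rewrite E; apply in_or_app; auto).
      assert (forall a, In a l2 -> In a l) by (intros; rewrite E; apply in_or_app; right; right; auto).
      specialize (H1 H0). specialize (H2 H3). lia. }
    assert (HkD : sumL Glen U <= INR k * D).
    { apply (elimT leP) in Hcnt. apply le_INR in Hcnt. assert (0 <= D) by (unfold D; lra). nra. }
    assert (0 <= D) by (unfold D; lra).
    assert (0 <= INR k) by apply pos_INR.
    rewrite HsL HsG HTb. fold D.
    set (LT := sumL Glen T) in *. set (LU := sumL Glen U) in *.
    set (GT := sumL (Gf l0) T) in *. set (GU := sumL (Gf b) U) in *.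
    assert (INR k * GU >= LU * LU) by nra.
    assert (2 * INR k * D * LT >= 2 * LU * LT) by nra.
    nra.
Qed.


Lemma bigR n (F : 'I_n -> R) : \big[Rplus/0]_(i < n) F i = sumL F (index_enum 'I_n).
Proof. rewrite unlock /=. elim: (index_enum _) => //=. Qed.

Lemma in_In (T : eqType) (x : T) (s : list T) : x \in s -> In x s.
Proof. elim: s => //= y s IH. rewrite inE => /orP [/eqP ->|H]; [left|right; auto]. by []. Qed.

Lemma In_enum (T : finType) (x : T) : In x (index_enum T).
Proof. apply in_In. by rewrite mem_index_enum. Qed.

Lemma sumL_ge_elem {A} (f : A -> R) l a : In a l -> (forall x, In x l -> 0 <= f x) -> f a <= sumL f l.
Proof.
  induction l as [|b l IH]; simpl; [tauto|]. intros [->|H] Hf.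
  - assert (0 <= sumL f l) by (apply sumL_ge0; auto). lra.
  - assert (f a <= sumL f l) by auto. assert (0 <= f b) by auto. lra.
Qed.

Lemma dotE d (a x : point d) : dot a x = sumL (fun j => a j * x j) (index_enum 'I_d).
Proof. unfold dot. apply bigR. Qed.

Fixpoint rsum (m : nat) (g : nat -> R) : R :=
  match m with O => 0 | S m' => rsum m' g + g m' end.

Lemma rsum_ext m f g : (forall i, (i < m)%coq_nat -> f i = g i) -> rsum m f = rsum m g.
Proof. induction m; simpl; intros H; auto. rewrite IHm; [rewrite H; auto|intros; apply H; lia]. Qed.
Lemma rsum_add m f g : rsum m (fun i => f i + g i) = rsum m f + rsum m g.
Proof. induction m; simpl; [lra|rewrite IHm; lra]. Qed.
Lemma rsum_scal m c f : rsum m (fun i => c * f i) = c * rsum m f.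
Proof. induction m; simpl; [lra|rewrite IHm; lra]. Qed.
Lemma rsum_ge0 m f : (forall i, (i < m)%coq_nat -> 0 <= f i) -> 0 <= rsum m f.
Proof. induction m; simpl; intros H; [lra|]. assert (0 <= rsum m f) by (apply IHm; intros; apply H; lia).
  assert (0 <= f m) by (apply H; lia). lra. Qed.
Lemma sumL_rsum {A} (l : list A) m (F : A -> nat -> R) :
  sumL (fun a => rsum m (F a)) l = rsum m (fun i => sumL (fun a => F a i) l).
Proof. induction l as [|a l IH]; simpl.
  - induction m; simpl; [lra|rewrite -IHm; lra].
  - rewrite IH -rsum_add. reflexivity. Qed.

Definition dotp {D} (y x : point D * R) := dot (fst y) (fst x) + snd y * snd x.

Definition Cone {D} m (a : nat -> point D * R) (b : point D * R) :=
  exists mu : nat -> R, (forall i, (i < m)%coq_nat -> 0 <= mu i) /\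
    (forall j, fst b j = rsum m (fun i => mu i * fst (a i) j)) /\
    snd b = rsum m (fun i => mu i * snd (a i)).

Lemma dotp_lin D y (x z : point D * R) al be :
  dotp y (fun j => al * fst x j + be * fst z j, al * snd x + be * snd z) = al * dotp y x + be * dotp y z.
Proof. unfold dotp. rewrite !dotE. simpl.
  rewrite (sumL_ext _ (fun j => al * (fst y j * fst x j) + be * (fst y j * fst z j))); [|intros; ring].
  rewrite sumL_add !sumL_scal. ring. Qed.

Lemma dotp_linl D (y w x : point D * R) al be :
  dotp (fun j => al * fst y j + be * fst w j, al * snd y + be * snd w) x = al * dotp y x + be * dotp w x.
Proof. unfold dotp. rewrite !dotE. simpl.
  rewrite (sumL_ext _ (fun j => al * (fst y j * fst x j) + be * (fst w j * fst x j))); [|intros; ring].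
  rewrite sumL_add !sumL_scal. ring. Qed.

Lemma dotp_ext D y (x x' : point D * R) : (forall j, fst x j = fst x' j) -> snd x = snd x' ->
  dotp y x = dotp y x'.
Proof. intros H1 H2. unfold dotp. rewrite H2 !dotE. f_equal. apply sumL_ext. intros. rewrite H1; auto. Qed.

Lemma dotp_rsum D y m (a : nat -> point D * R) mu :
  dotp y (fun j => rsum m (fun i => mu i * fst (a i) j), rsum m (fun i => mu i * snd (a i))) =
  rsum m (fun i => mu i * dotp y (a i)).
Proof. unfold dotp. rewrite dotE. simpl.
  rewrite (sumL_ext _ (fun j => rsum m (fun i => mu i * (fst y j * fst (a i) j)))).
  2:{ intros j _. rewrite -rsum_scal. apply rsum_ext. intros; ring. }
  rewrite sumL_rsum -rsum_scal -rsum_add. apply rsum_ext. intros i _.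
  rewrite sumL_scal dotE. ring. Qed.

Lemma rsum_comb m (ya : R) (A c : nat -> R) (B : R) mu : ya <> 0 ->
  rsum m (fun i => mu i * (1 * A i + (- (c i / ya)) * B)) =
  rsum m (fun i => mu i * A i) + (- (rsum m (fun i => mu i * c i) / ya)) * B.
Proof. intros H. induction m as [|m' IHm]; simpl. { field. auto. } rewrite IHm. field. auto. Qed.

Lemma farkas D : forall m (a : nat -> point D * R) (b : point D * R), ~ Cone m a b ->
  exists y, (forall i, (i < m)%coq_nat -> 0 <= dotp y (a i)) /\ dotp y b < 0.
Proof.
  induction m as [|m IH]; intros a b Hnc.
  - exists (fun j => - fst b j, - snd b). split; [intros; lia|].
    unfold dotp. rewrite dotE. simpl.
    assert (Hpos : 0 < sumL (fun j => fst b j * fst b j) (index_enum 'I_D) + snd b * snd b).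
    { destruct (Req_dec (snd b) 0) as [Hs|Hs].
      - destruct (classic (exists j, fst b j <> 0)) as [[j Hj]|Hn].
        + pose proof (sumL_ge_elem (fun j => fst b j * fst b j) _ j (In_enum _ j)).
          assert (0 < fst b j * fst b j) by (apply Rsqr_pos_lt; auto).
          assert (0 <= snd b * snd b) by nra. 
          assert (fst b j * fst b j <= sumL (fun j0 => fst b j0 * fst b j0) (index_enum 'I_D)).
          { apply H. intros; nra. } lra.
        + exfalso. apply Hnc. exists (fun _ => 0). split; [intros; lra|split; simpl; auto].
          intros j. destruct (Req_dec (fst b j) 0); auto. exfalso; apply Hn; eauto.
      - assert (0 <= sumL (fun j => fst b j * fst b j) (index_enum 'I_D)) by (apply sumL_ge0; intros; nra).
        assert (0 < snd b * snd b) by (apply Rsqr_pos_lt; auto). lra. }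
    rewrite (sumL_ext _ (fun j => -1 * (fst b j * fst b j))); [|intros; ring].
    rewrite sumL_scal. lra.
  - assert (Hnc' : ~ Cone m a b).
    { intros [mu [H1 [H2 H3]]]. apply Hnc. exists (fun i => if Nat.ltb i m then mu i else 0).
      split; [|split].
      - intros i Hi. destruct (Nat.ltb_spec i m); [apply H1; auto|lra].
      - intros j. rewrite H2. simpl. destruct (Nat.ltb_spec m m); [lia|]. rewrite Rmult_0_l Rplus_0_r.
        apply rsum_ext. intros i Hi. destruct (Nat.ltb_spec i m); [auto|lia].
      - rewrite H3. simpl. destruct (Nat.ltb_spec m m); [lia|]. rewrite Rmult_0_l Rplus_0_r.
        apply rsum_ext. intros i Hi. destruct (Nat.ltb_spec i m); [auto|lia]. }
    destruct (IH a b Hnc') as [y [Hy1 Hy2]].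
    destruct (Rle_dec 0 (dotp y (a m))) as [Hm|Hm].
    { exists y. split; auto. intros i Hi. destruct (Nat.eq_dec i m) as [->|]; auto. apply Hy1; lia. }
    set (ya := dotp y (a m)).
    set (a' := fun i => (fun j => 1 * fst (a i) j + (- (dotp y (a i) / ya)) * fst (a m) j,
                        1 * snd (a i) + (- (dotp y (a i) / ya)) * snd (a m))).
    set (b' := (fun j => 1 * fst b j + (- (dotp y b / ya)) * fst (a m) j,
                        1 * snd b + (- (dotp y b / ya)) * snd (a m))).
    assert (Hya : ya < 0) by (unfold ya; lra).
    assert (Hcomb : forall (A : nat -> R) (c : nat -> R) (B : R) mu,
      rsum m (fun i => mu i * (1 * A i + (- (c i / ya)) * B)) =
      rsum m (fun i => mu i * A i) + (- (rsum m (fun i => mu i * c i) / ya)) * B).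
    { intros. apply rsum_comb. lra. }
    assert (Hnc2 : ~ Cone m a' b').
    { intros [mu [H1 [H2 H3]]]. apply Hnc.
      set (th := (dotp y b - rsum m (fun i => mu i * dotp y (a i))) / ya).
      assert (Hth : 0 <= th).
      { unfold th. assert (0 <= rsum m (fun i => mu i * dotp y (a i))).
        { apply rsum_ge0. intros i Hi. specialize (H1 i Hi). specialize (Hy1 i Hi). nra. }
        assert (/ ya < 0) by (apply Rinv_lt_0_compat; lra). unfold Rdiv. nra. }
      assert (Hmu' : forall (F : nat -> R), rsum (S m) (fun i => (if Nat.ltb i m then mu i else th) * F i)
                  = rsum m (fun i => mu i * F i) + th * F m).
      { intros F. simpl. destruct (Nat.ltb_spec m m); [lia|]. f_equal. apply rsum_ext.
        intros i Hi. destruct (Nat.ltb_spec i m); [auto|lia]. }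
      assert (Eth : th = dotp y b / ya - rsum m (fun i => mu i * dotp y (a i)) / ya) by (unfold th; field; lra).
      exists (fun i => if Nat.ltb i m then mu i else th). split; [|split].
      - intros i Hi. destruct (Nat.ltb_spec i m); [apply H1; auto|auto].
      - intros j. rewrite Hmu'. specialize (H2 j). unfold b', a' in H2. simpl in H2.
        rewrite (Hcomb (fun i => fst (a i) j) (fun i => dotp y (a i))) in H2.
        rewrite Eth. nra.
      - rewrite Hmu'. unfold b', a' in H3. simpl in H3.
        rewrite (Hcomb (fun i => snd (a i)) (fun i => dotp y (a i))) in H3.
        rewrite Eth. nra. }
    destruct (IH a' b' Hnc2) as [y2 [Hy21 Hy22]].
    set (c2 := dotp y2 (a m)).
    exists (fun j => 1 * fst y2 j + (- (c2 / ya)) * fst y j, 1 * snd y2 + (- (c2 / ya)) * snd y).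
    split.
    + intros i Hi. rewrite dotp_linl.
      destruct (Nat.eq_dec i m) as [->|Hne].
      * fold c2 ya. field_simplify; [lra|lra].
      * assert (Hi' : (i < m)%coq_nat) by lia. specialize (Hy21 i Hi'). unfold a' in Hy21.
        rewrite dotp_lin in Hy21. fold c2 in Hy21. 
        replace (1 * dotp y2 (a i) + - (c2 / ya) * dotp y (a i))
          with (1 * dotp y2 (a i) + - (dotp y (a i) / ya) * c2) by (field; lra). auto.
    + rewrite dotp_linl. unfold b' in Hy22. rewrite dotp_lin in Hy22. fold c2 in Hy22.
      replace (1 * dotp y2 b + - (c2 / ya) * dotp y b)
          with (1 * dotp y2 b + - (dotp y b / ya) * c2) by (field; lra). auto.
Qed.

Section S_3.
Set Implicit Arguments.
Unset Strict Implicit.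

Lemma affine_sep D (m : nat) (q : nat -> point D) (p : point D) :
  (exists mu, (forall i, (i < m)%coq_nat -> 0 <= mu i) /\ rsum m mu = 1 /\
      forall j, p j = rsum m (fun i => mu i * q i j)) \/
  (exists v : point D, forall i, (i < m)%coq_nat -> dot v p < dot v (q i)).
Proof.
  destruct (classic (Cone m (fun i => (q i, 1)) (p, 1))) as [[mu [H1 [H2 H3]]]|Hn].
  - left. exists mu. split; auto. split; [|exact H2].
    simpl in H3. rewrite H3. apply rsum_ext. intros; ring.
  - right. destruct (@farkas D m _ _ Hn) as [y [Hy1 Hy2]]. exists (fst y).
    intros i Hi. specialize (Hy1 i Hi). unfold dotp in *. simpl in *. lra.
Qed.

Lemma wsum_app d (l1 l2 : list (R * point d)) : wsum (app l1 l2) = wsum l1 + wsum l2.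
Proof. induction l1 as [|[w p] l IH]; simpl; [lra|rewrite IH; lra]. Qed.
Lemma comb_app d (l1 l2 : list (R * point d)) j : comb (app l1 l2) j = comb l1 j + comb l2 j.
Proof. induction l1 as [|[w p] l IH]; simpl; unfold vadd, vzero, vscale; simpl; [lra|rewrite IH; lra]. Qed.

Lemma wsum_seq d m (mu : nat -> R) (q : nat -> point d) :
  wsum (List.map (fun i => (mu i, q i)) (List.seq 0 m)) = rsum m mu.
Proof. induction m; [simpl; auto|]. rewrite List.seq_S List.map_app wsum_app IHm. simpl. lra. Qed.
Lemma comb_seq d m (mu : nat -> R) (q : nat -> point d) j :
  comb (List.map (fun i => (mu i, q i)) (List.seq 0 m)) j = rsum m (fun i => mu i * q i j).
Proof. induction m; [simpl; auto|]. rewrite List.seq_S List.map_app comb_app IHm. simpl.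
  unfold vadd, vscale, vzero. lra. Qed.

Lemma S_ext d (S : point d -> Prop) x x' : S x -> (forall j, x j = x' j) -> S x'.
Proof. intros H E. replace x' with x; auto. apply functional_extensionality; auto. Qed.

Lemma int_ext d (S : point d -> Prop) x x' : interiorR S x -> (forall j, x j = x' j) -> interiorR S x'.
Proof. intros [e [He H]] E. exists e. split; auto. intros y Hy. apply H. intros i. rewrite E; auto. Qed.

Lemma int_mem d (S : point d -> Prop) x : interiorR S x -> S x.
Proof. intros [e [He H]]. apply H. intros i. rewrite Rminus_diag Rabs_R0. auto. Qed.

Lemma int_comb d (K : point d -> Prop) z y th : is_convex K -> interiorR K z -> K y -> 0 <= th < 1 ->
  interiorR K (fun j => (1 - th) * z j + th * y j).
Proof.
  intros Hc [e [He H]] Hy Hth. exists ((1 - th) * e). split; [nra|].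
  intros w Hw.
  set (z' := fun j => (w j - th * y j) / (1 - th)).
  assert (Kz' : K z').
  { apply H. intros i. specialize (Hw i). unfold z'.
    replace ((w i - th * y i) / (1 - th) - z i) with ((w i - ((1 - th) * z i + th * y i)) / (1 - th)) by (field; lra).
    unfold Rdiv. rewrite Rabs_mult Rabs_inv (Rabs_right (1 - th)); [|lra].
    apply (Rmult_lt_reg_r (1 - th)); [lra|]. rewrite Rmult_assoc Rinv_l; [|lra]. nra. }
  pose proof (Hc z' y Kz' Hy (1 - th) ltac:(lra)) as Hk.
  eapply S_ext; [exact Hk|]. intros j. unfold vadd, vscale, z'. field. lra.
Qed.

Lemma center_int d (K : point d -> Prop) c : is_convex K -> (exists z, interiorR K z) ->
  (forall x, K x -> K (vadd (vscale 2 c) (vscale (-1) x))) -> interiorR K c.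
Proof.
  intros Hc [z Hz] Hs.
  assert (Hz' : interiorR K (vadd (vscale 2 c) (vscale (-1) z))).
  { destruct Hz as [e [He H]]. exists e. split; auto. intros w Hw.
    assert (K (vadd (vscale 2 c) (vscale (-1) w))).
    { apply H. intros i. specialize (Hw i). unfold vadd, vscale in *.
      replace (2 * c i + -1 * w i - z i) with (- (w i - (2 * c i + -1 * z i))) by ring. rewrite Rabs_Ropp. auto. }
    apply Hs in H0. eapply S_ext; [exact H0|]. intros j; unfold vadd, vscale; ring. }
  pose proof (int_comb (th:=1/2) Hc Hz (int_mem Hz') ltac:(lra)) as Hi.
  eapply int_ext; [exact Hi|]. intros j; unfold vadd, vscale; field.
Qed.

Lemma homothet_int d (K : point d -> Prop) o tau w : 0 < tau -> interiorR K w ->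
  interiorR (homothet o tau K) (fun j => o j + tau * w j).
Proof.
  intros Ht [e [He H]]. exists (tau * e). split; [nra|]. intros y Hy.
  exists (fun j => (y j - o j) / tau). split.
  - apply H. intros i. specialize (Hy i).
    replace ((y i - o i) / tau - w i) with ((y i - (o i + tau * w i)) / tau) by (field; lra).
    unfold Rdiv. rewrite Rabs_mult Rabs_inv (Rabs_right tau); [|lra].
    apply (Rmult_lt_reg_r tau); [lra|]. rewrite Rmult_assoc Rinv_l; [|lra]. nra.
  - apply functional_extensionality. intros j. unfold vadd, vscale. field. lra.
Qed.

End S_3.
Section S_4.
Set Implicit Arguments.
Unset Strict Implicit.

Lemma dot_ext d (v x x' : point d) : (forall j, x j = x' j) -> dot v x = dot v x'.
Proof. intros H. rewrite !dotE. apply sumL_ext. intros; rewrite H; auto. Qed.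

Lemma dot_lin3 d (v x1 x2 x3 : point d) a1 a2 a3 :
  dot v (fun j => a1 * x1 j + a2 * x2 j + a3 * x3 j) = a1 * dot v x1 + a2 * dot v x2 + a3 * dot v x3.
Proof. rewrite !dotE.
  rewrite (sumL_ext _ (fun j => a1 * (v j * x1 j) + a2 * (v j * x2 j) + a3 * (v j * x3 j))); [|intros; ring].
  rewrite !sumL_add !sumL_scal. ring. Qed.

Lemma dot_zero d (v x : point d) : (forall j, v j = 0) -> dot v x = 0.
Proof. intros H. rewrite dotE. rewrite (sumL_ext _ (fun j => 0 * (v j * x j))); [|intros; rewrite H; ring].
  rewrite sumL_scal. ring. Qed.

Lemma sumL_swap {A B} (F : A -> B -> R) l1 l2 :
  sumL (fun b => sumL (fun a => F a b) l1) l2 = sumL (fun a => sumL (fun b => F a b) l2) l1.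
Proof. induction l2 as [|b l2 IH]; simpl.
  - induction l1; simpl; auto. rewrite -IHl1. ring.
  - rewrite IH -sumL_add. reflexivity. Qed.

Lemma sumL_pos {A} (f : A -> R) l : l <> nil -> (forall a, In a l -> 0 < f a) -> 0 < sumL f l.
Proof. destruct l as [|a l]; [congruence|]. intros _ H. simpl.
  assert (0 < f a) by (apply H; now left). assert (0 <= sumL f l) by (apply sumL_ge0; intros; left; apply H; now right).
  lra. Qed.

Lemma nsum_filter {A} (f : A -> nat) (l : list A) : (forall a, f a = 0%nat \/ f a = 1%nat) ->
  nsum f l = size (seq.filter (fun a => Nat.eqb (f a) 1) l).
Proof. intros H. induction l as [|a l IH]; simpl; auto.
  destruct (H a) as [E|E]; rewrite E; simpl; rewrite IH; auto. Qed.

Lemma ind01 w iv : indI w iv = 0%nat \/ indI w iv = 1%nat.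
Proof. unfold indI. destruct (Rlt_dec (fst iv) w); simpl; auto. destruct (Rlt_dec w (snd iv)); simpl; auto. Qed.

Lemma ind1 w iv : indI w iv = 1%nat -> fst iv < w < snd iv.
Proof. unfold indI. destruct (Rlt_dec (fst iv) w); simpl; [|discriminate].
  destruct (Rlt_dec w (snd iv)); simpl; [auto|discriminate]. Qed.

End S_4.

Theorem theorem9 (d k n : nat) (K : point d -> Prop)
  (o : 'I_n -> point d) (tau : 'I_n -> R) :
  (0 < k)%nat ->
  (0 < n)%nat ->
  convex_body K ->
  centrally_symmetric K ->
  (forall i, 0 < tau i) ->
  (forall (a : point d) (b : R), (exists j, a j <> 0) ->
     forall s : seq 'I_n, uniq s ->
       (forall i, i \in s ->
          exists x, interiorR (homothet (o i) (tau i) K) x /\ hyperplane a b x) ->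
       (size s <= k)%nat) ->
  exists t : point d, forall x, K x ->
    convhull (fun y => exists i, homothet (o i) (tau i) K y)
      (vadd t (vscale ((\big[Rplus/0]_(i < n) tau i) / INR k) x)).
Proof.
  intros Hk Hn HK Hsym Htau Hhyp.
  destruct n as [|n']; [discriminate|].
  destruct HK as [_ [Hconv Hint]]. destruct Hsym as [c Hc].
  pose proof (center_int Hconv Hint Hc) as Hci.
  set (E := index_enum 'I_n'.+1).
  set (T := \big[Rplus/0]_(i < n'.+1) tau i).
  assert (HT : T = sumL tau E) by apply bigR.
  assert (HEne : E <> nil).
  { intros HE. pose proof (In_enum _ (@ord0 n')) as H. unfold E in HE. rewrite HE in H. destruct H. }
  assert (Tpos : 0 < T) by (rewrite HT; apply sumL_pos; auto).
  assert (kpos : 0 < INR k) by (apply lt_0_INR; apply/ltP; exact Hk).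
  set (lam := T / INR k).
  set (t := fun j => sumL (fun i => tau i * (o i j + tau i * c j)) E / T - lam * c j).
  exists t. intros x Hx.
  set (m := (n'.+1 + n'.+1)%coq_nat).
  set (qp := fun i : 'I_n'.+1 => vadd (o i) (vscale (tau i) x)).
  set (xm := vadd (vscale 2 c) (vscale (-1) x)).
  assert (Kxm : K xm) by (apply Hc; auto).
  set (qm := fun i : 'I_n'.+1 => vadd (o i) (vscale (tau i) xm)).
  set (q := fun i : nat => if Nat.ltb i n'.+1 then qp (inord i) else qm (inord (i - n'.+1))).
  set (p := vadd t (vscale lam x)).
  destruct (affine_sep m q p) as [[mu [Hmu1 [Hmu2 Hmu3]]] | [v Hv]].
  - exists (List.map (fun i => (mu i, q i)) (List.seq 0 m)). split; [|split].
    + intros wp Hwp. apply in_map_iff in Hwp. destruct Hwp as [i [<- Hi]]. apply in_seq in Hi. simpl.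
      split; [apply Hmu1; lia|].
      unfold q. destruct (Nat.ltb_spec i n'.+1).
      * exists (inord i). exists x. split; auto.
      * exists (inord (i - n'.+1)). exists xm. split; auto.
    + rewrite wsum_seq. auto.
    + apply functional_extensionality. intros j. rewrite comb_seq. apply Hmu3.
  - exfalso.
    set (A := fun i : 'I_n'.+1 => dot v (o i) + tau i * dot v c).
    set (sg := dot v x - dot v c).
    assert (Hqp : forall i, dot v (qp i) = A i + tau i * sg).
    { intros i. unfold qp, A, sg.
      rewrite (dot_ext v (x' := fun j => 1 * o i j + tau i * x j + 0 * c j)); [|intros j; unfold vadd, vscale; ring].
      rewrite dot_lin3. ring. }
    assert (Hqm : forall i, dot v (qm i) = A i - tau i * sg).
    { intros i. unfold qm, A, sg, xm.
      rewrite (dot_ext v (x' := fun j => 1 * o i j + (- tau i) * x j + (2 * tau i) * c j)); [|intros j; unfold vadd, vscale; ring].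
      rewrite dot_lin3. ring. }
    set (SA := sumL (fun i => tau i * A i) E).
    assert (Hp : dot v p = SA / T + lam * sg).
    { unfold p, t, SA, sg, A.
      rewrite (dot_ext v (x' := fun j => (1 / T) * sumL (fun i => tau i * (o i j + tau i * c j)) E
                 + lam * x j + (- lam) * c j)); [|intros j; unfold vadd, vscale; field; lra].
      rewrite dot_lin3.
      assert (HS : dot v (fun j => sumL (fun i => tau i * (o i j + tau i * c j)) E)
                 = sumL (fun i => tau i * (dot v (o i) + tau i * dot v c)) E).
      { rewrite dotE.
        rewrite (sumL_ext _ (fun j => sumL (fun i => v j * (tau i * (o i j + tau i * c j))) E)).
        2:{ intros j _. rewrite sumL_scal. reflexivity. }
        rewrite sumL_swap. apply sumL_ext. intros i _. rewrite !dotE -!sumL_scal -sumL_add.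
        rewrite -sumL_scal. apply sumL_ext. intros; ring. }
      rewrite HS. field. lra. }
    assert (Hlt : forall i : 'I_n'.+1, dot v p < A i - tau i * Rabs sg).
    { intros i. pose proof (ltn_ord i) as Hi. apply (elimT ltP) in Hi.
      assert (H1 := Hv (nat_of_ord i) ltac:(unfold m; lia)).
      assert (H2 := Hv (n'.+1 + nat_of_ord i)%coq_nat ltac:(unfold m; lia)).
      unfold q in H1, H2.
      destruct (Nat.ltb_spec (nat_of_ord i) n'.+1); [|lia].
      destruct (Nat.ltb_spec (n'.+1 + nat_of_ord i)%coq_nat n'.+1); [lia|].
      replace (((n'.+1 + nat_of_ord i)%coq_nat - n'.+1)%nat) with (nat_of_ord i) in H2 by lia.
      rewrite inord_val in H1, H2. rewrite Hqp in H1. rewrite Hqm in H2.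
      pose proof (Htau i). destruct (Rle_dec 0 sg).
      - rewrite Rabs_right; nra.
      - rewrite Rabs_left; nra. }
    assert (Hvnz : exists j, v j <> 0).
    { apply NNPP. intros Hn0. assert (Hz : forall j, v j = 0).
      { intros j. apply NNPP. intros H. apply Hn0. eauto. }
      pose proof (Hv 0%nat ltac:(unfold m; lia)) as H0. rewrite !(dot_zero _ Hz) in H0. lra. }
    assert (HTE : T = sumL tau E) by exact HT.
    destruct (Req_dec sg 0) as [Hsg0|Hsg0].
    {
      rewrite Hsg0 Rmult_0_r Rplus_0_r in Hp.
      assert (Hpos : 0 < sumL (fun i => tau i * (A i - SA / T)) E).
      { apply sumL_pos; auto. intros i _. pose proof (Hlt i) as H. rewrite Hp Hsg0 Rabs_R0 Rmult_0_r Rminus_0_r in H.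
        pose proof (Htau i). nra. }
      rewrite (sumL_ext _ (fun i => tau i * A i + (- (SA / T)) * tau i)) in Hpos; [|intros; ring].
      rewrite sumL_add sumL_scal -HTE in Hpos. fold SA in Hpos.
      assert (SA / T * T = SA) by (field; lra). lra. }
    set (sig := Rabs sg).
    assert (Hsig : 0 < sig) by (apply Rabs_pos_lt; auto).
    set (f := fun i : 'I_n'.+1 => (- A i - tau i * sig, - A i + tau i * sig)).
    set (l := List.map f E).
    destruct (max_decomp snd l) as [l1 [x0 [l2 [El Hmax]]]].
    { unfold l. destruct E; [congruence|discriminate]. }
    set (b := snd x0).
    assert (Hb : b < - dot v p).
    { assert (In x0 l) by (rewrite El; apply in_or_app; right; now left).
      unfold l in H. apply in_map_iff in H. destruct H as [i [<- _]].
      unfold b, f. simpl. pose proof (Hlt i). fold sig in H. lra. }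
    assert (Hcond : forall iv, In iv l -> fst iv <= snd iv /\ snd iv <= b).
    { intros iv Hiv. split; [|apply Hmax; auto].
      unfold l in Hiv. apply in_map_iff in Hiv. destruct Hiv as [i [<- _]]. unfold f. simpl.
      pose proof (Htau i). nra. }
    assert (Hcnt : forall w, (nsum (indI w) l <= k)%nat).
    { intros w. unfold l. rewrite nsum_map. rewrite nsum_filter; [|intros; apply ind01].
      apply (Hhyp v (- w) Hvnz).
      - apply filter_uniq. apply index_enum_uniq.
      - intros i Hi. rewrite mem_filter in Hi. move/andP: Hi => [Hi _].
        apply (elimT (Nat.eqb_spec _ _)) in Hi. apply ind1 in Hi. unfold f in Hi. simpl in Hi.
        pose proof (Htau i) as Hti.
        set (th := (- w - A i) / (tau i * sg)).
        assert (Hth : Rabs th < 1).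
        { unfold th. unfold Rdiv. rewrite Rabs_mult Rabs_inv Rabs_mult (Rabs_right (tau i)); [|lra].
          fold sig. apply (Rmult_lt_reg_r (tau i * sig)); [nra|].
          rewrite Rmult_assoc Rinv_l; [|nra]. rewrite Rmult_1_r Rmult_1_l.
          apply Rabs_def1; lra. }
        set (wt := fun j => c j + th * (x j - c j)).
        assert (Hwt : interiorR K wt).
        { destruct (Rle_dec 0 th) as [Hp0|Hn0].
          - rewrite Rabs_right in Hth; [|lra].
            pose proof (int_comb (th:=th) Hconv Hci Hx ltac:(lra)) as H.
            eapply int_ext; [exact H|]. intros j; unfold wt; ring.
          - rewrite Rabs_left in Hth; [|lra].
            pose proof (int_comb (th:=-th) Hconv Hci Kxm ltac:(lra)) as H.
            eapply int_ext; [exact H|]. intros j; unfold wt, xm, vadd, vscale; ring. }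
        exists (fun j => o i j + tau i * wt j). split.
        + apply homothet_int; auto.
        + unfold hyperplane.
          rewrite (dot_ext v (x' := fun j => 1 * o i j + (tau i * th) * x j + (tau i * (1 - th)) * c j));
            [|intros j; unfold wt; ring].
          rewrite dot_lin3. unfold th.
          assert (Esg : sg = dot v x - dot v c) by reflexivity.
          assert (Ew : - w = A i + tau i * sg * ((- w - A i) / (tau i * sg))) by (field; split; lra).
          rewrite Ew. unfold A. rewrite Esg. field. split; [|lra]. fold sg. auto. }
    pose proof (main1D k (length l) l b (erefl _) Hcond Hcnt) as Hmain.
    assert (HL : sumL Glen l = 2 * sig * T).
    { unfold l. rewrite sumL_map HTE -sumL_scal. apply sumL_ext. intros i _. unfold Glen, f. simpl. ring. }
    assert (HG : sumL (Gf b) l = 4 * sig * (b * T + SA)).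
    { unfold l. rewrite sumL_map HTE. unfold SA.
      rewrite (sumL_ext _ (fun i => (4 * sig * b) * tau i + (4 * sig) * (tau i * A i))).
      2:{ intros i _. unfold Gf, f. simpl. ring. }
      rewrite sumL_add !sumL_scal. ring. }
    rewrite HL HG in Hmain.
    assert (Hm2 : sig * (T * T) <= INR k * (b * T + SA)).
    { apply (Rmult_le_reg_l (4 * sig)); [lra|]. nra. }
    assert (Hlam : lam * INR k = T) by (unfold lam; field; lra).
    assert (Hsl : - (lam * sg) <= lam * sig).
    { assert (0 <= lam) by (unfold lam; apply Rlt_le; apply Rdiv_lt_0_compat; lra).
      unfold sig. destruct (Rle_dec 0 sg); [rewrite Rabs_right; nra|rewrite Rabs_left; nra]. }
    assert (Hb2 : b * T < - SA + lam * sig * T).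
    { rewrite Hp in Hb. assert (SA / T * T = SA) by (field; lra). nra. }
    assert (INR k * (b * T + SA) < sig * (T * T)).
    { assert (INR k * (b * T + SA) < INR k * (lam * sig * T)) by nra. nra. }
    lra.
Qed.
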